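(* For unweighted directed graphs and any threshold $\zeta\ge 1$, there exists an $O(\zeta)$-round deterministic $\mathsf{CONGEST}$ algorithm that lets the first endpoint $v_i$ of each edge $e=(v_i,v_{i+1})$ of $P$ compute the shortest length of a replacement path for $e$ with a short detour (i.e., with a detour of at most $\zeta$ hops).
   Context: $G=(V,E)$ is an unweighted directed graph with $n=|V|$ which is also the communication network (communication over edges in both directions). $\mathsf{CONGEST}$: synchronous rounds, each vertex may send an $O(\log n)$-bit message to each neighbour per round, unique identifiers, unlimited local computation. $P=(s=v_0,v_1,\dots,v_{h_{st}}=t)$ is a given shortest $s$-$t$ path. Initially the endpoints of each edge of $P$ know the edge belongs to $P$, and each vertex $v_i$ of $P$ knows its index $i$, $\mathrm{dist}(s,v_i)$ and $\mathrm{dist}(v_i,t)$. A replacement path for $e=(v_i,v_{i+1})$ of the considered form is an $s$-$t$ path consisting of the subpath of $P$ from $s$ to $v_j$, then a path (the detour) from $v_j$ to $v_l$ sharing no edge with $P$, then the subpath of $P$ from $v_l$ to $t$, where $j\le i$ and $l\ge i+1$. The detour is short if it has at most $\zeta$ edges. The required output is the minimum length over all such replacement paths for $e$ with a short detour ($\infty$ if none exists). *)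

(* Defs.v *)
From mathcomp Require Import all_boot.
Unset Printing Implicit Defensive.

Definition nbits (x : nat) : nat := (trunc_log 2 x).+1.

Record local_input := LocalInput {
  li_n     : nat;
  li_zeta  : nat;
  li_id    : nat;
  li_out   : seq nat;
  li_in    : seq nat;
  li_pos   : option (nat * nat * nat);    (* Some (i, dist(s,v_i), dist(v_i,t)) if v = v_i on P *)
  li_pnext : option nat;                  (* id of v_{i+1}: edge (v_i,v_{i+1}) is on P *)
  li_pprev : option nat                   (* id of v_{i-1}: edge (v_{i-1},v_i) is on P *)
}.

(* A deterministic CONGEST algorithm: arbitrary local state (unlimited local
   computation), a message (bit string) to each neighbour (given by its id) per
   round, a state update from the id-tagged received messages, and an output. *)
Record congest_algo := CongestAlgo {
  St       : Type;
  alg_init : local_input -> St;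
  alg_send : St -> nat -> seq bool;
  alg_recv : St -> seq (nat * seq bool) -> St;
  alg_out  : St -> option nat             (* None encodes infinity *)
}.

Section Model.
Variable n : nat.
Variable g : rel 'I_n.

(* communication network: edges used in both directions *)
Definition comm (u v : 'I_n) : bool := (u != v) && (g u v || g v u).

Fixpoint run (A : congest_algo) (idf : 'I_n -> nat)
    (inp : 'I_n -> local_input) (r : nat) : 'I_n -> St A :=
  match r with
  | 0 => fun v => alg_init A (inp v)
  | r'.+1 => let c := run A idf inp r' in
      fun v => alg_recv A (c v)
        [seq (idf u, alg_send A (c u) (idf v)) | u <- enum 'I_n & comm u v]
  end.

(* The given path P = s :: ps = (v_0, ..., v_h), h = size ps. *)
Variables (s : 'I_n) (ps : seq 'I_n).
Definition pv (k : nat) : 'I_n := nth s (s :: ps) k.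
Definition hst : nat := size ps.

Definition shortest_path : Prop :=
  path g s ps /\
  forall w : seq 'I_n, path g s w -> last s w = last s ps -> size ps <= size w.

Definition onP (x y : 'I_n) : bool :=
  has (fun k => (pv k == x) && (pv k.+1 == y)) (iota 0 hst).

(* Local inputs: for v = v_k on P, index k, dist(s,v_k) = k and
   dist(v_k,t) = h - k (P is shortest), and the ids of its P-neighbours. *)
Definition input (idf : 'I_n -> nat) (zeta : nat) (v : 'I_n) : local_input :=
  let k := index v (s :: ps) in
  let onp := v \in s :: ps in
  LocalInput n zeta (idf v)
    [seq idf u | u <- enum 'I_n & g v u]
    [seq idf u | u <- enum 'I_n & g u v]
    (if onp then Some (k, k, hst - k) else None)
    (if onp && (k < hst) then Some (idf (pv k.+1)) else None)
    (if onp && (0 < k) then Some (idf (pv k.-1)) else None).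

(* There is a replacement path for e_i = (v_i, v_{i+1}) of length len of the
   form P[s,v_j] . D . P[v_l,t], j <= i < l, where the detour D from v_j to
   v_l is a (simple) path in g with at most zeta edges sharing no edge with P. *)
Definition short_rp (zeta i len : nat) : Prop :=
  exists (j l : nat) (d : seq 'I_n),
    [/\ j <= i, i < l <= hst, path g (pv j) d & last (pv j) d = pv l] /\
    [/\ uniq (pv j :: d), size d <= zeta,
        all (fun e => ~~ onP e.1 e.2) (zip (pv j :: d) d)
      & len = j + size d + (hst - l)].

Definition rp_value (zeta i : nat) (o : option nat) : Prop :=
  match o with
  | Some m => short_rp zeta i m /\ forall m', short_rp zeta i m' -> m <= m'
  | None => forall m, ~ short_rp zeta i m
  end.

End Model.
Arguments comm {n} g u v.
Arguments pv {n} s ps k.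
Arguments run {n} g A idf inp r _.
Arguments shortest_path {n} g s ps.
Arguments input {n} g s ps idf zeta v.
Arguments rp_value {n} g s ps zeta i o.
Arguments short_rp {n} g s ps zeta i len.

(* Main.v *)
Require Import Defs.
From mathcomp Require Import all_boot.
From mathcomp Require Import zify.

Fixpoint enc (w x : nat) : seq bool :=
  if w is w'.+1 then odd x :: enc w' x./2 else [::].
Fixpoint dec (bs : seq bool) : nat :=
  if bs is b :: bs' then b + (dec bs').*2 else 0.

Lemma size_enc w x : size (enc w x) = w.
Proof. by elim: w x => //= w IH x; rewrite IH. Qed.

Lemma dec_enc w x : x < 2 ^ w -> dec (enc w x) = x.
Proof.
elim: w x => [|w IH] x /=; first by rewrite expn0 ltnS leqn0 => /eqP->.
move=> hx; rewrite IH ?odd_double_half //.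
by rewrite ltn_half_double -mul2n -expnS.
Qed.

Record ast := Ast { a_inp : local_input; a_t : nat; a_m : nat;
                    a_hist : seq nat; a_r2 : nat }.

Definition Wd (N : nat) := (nbits N).+1.

Definition Cfun (B dt : nat) (hist : seq nat) (i : nat) : nat :=
  minn B (foldr minn B [seq (if nth 0 hist r <= i then nth 0 hist r + r + dt else B)
                        | r <- iota 0 (size hist)]).

Definition a_init (li : local_input) : ast :=
  let m0 := if li_pos li is Some (k, _, _) then k else li_n li in
  Ast li 0 m0 [:: m0] (2 * li_n li).

Definition Cval (st : ast) (i : nat) : nat :=
  match li_pos (a_inp st) with
  | Some (_, _, dt) => Cfun (2 * li_n (a_inp st)) dt (a_hist st) i
  | None => 2 * li_n (a_inp st) end.

Definition outv (st : ast) : nat :=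
  if a_t st < li_zeta (a_inp st) then a_m st
  else match li_pos (a_inp st) with
       | Some (l, _, _) =>
           minn (Cval st (l + (a_t st - li_zeta (a_inp st)) - li_zeta (a_inp st))) (a_r2 st)
       | None => 2 * li_n (a_inp st) end.

Definition a_send (st : ast) (_ : nat) : seq bool :=
  enc (Wd (li_n (a_inp st))) (outv st).

Definition lookup (pid : nat) (msgs : seq (nat * seq bool)) : seq bool :=
  head [::] [seq p.2 | p <- msgs & p.1 == pid].

Definition a_recv (st : ast) (msgs : seq (nat * seq bool)) : ast :=
  let li := a_inp st in
  if a_t st < li_zeta li then
    let mn := foldr minn (li_n li)
       [seq dec p.2 | p <- msgs & (p.1 \in li_in li) && (Some p.1 != li_pprev li)] in
    let m' := minn (a_m st) mn in
    Ast li (a_t st).+1 m' (rcons (a_hist st) m') (a_r2 st)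
  else
    Ast li (a_t st).+1 (a_m st) (a_hist st)
      (match li_pnext li with Some pid => dec (lookup pid msgs)
                            | None => 2 * li_n li end).

Definition a_out (st : ast) : option nat :=
  if a_r2 st < 2 * li_n (a_inp st) then Some (a_r2 st) else None.

Definition Alg : congest_algo := @CongestAlgo ast a_init a_send a_recv a_out.

Lemma fmin_le (B y : nat) (l : seq nat) : y \in l -> foldr minn B l <= y.
Proof.
elim: l => //= a l IH; rewrite inE => /orP[/eqP->|/IH h]; first exact: geq_minl.
exact: leq_trans (geq_minr _ _) h.
Qed.

Lemma fmin_leB (B : nat) (l : seq nat) : foldr minn B l <= B.
Proof. elim: l => //= a l IH; exact: leq_trans (geq_minr _ _) IH. Qed.

Lemma fmin_in (B : nat) (l : seq nat) : foldr minn B l < B -> foldr minn B l \in l.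
Proof.
elim: l => [|a l IH]; first by rewrite /= ltnn.
change (foldr minn B (a::l)) with (minn a (foldr minn B l)); rewrite inE.
case: (leqP a (foldr minn B l)) => h.
  by rewrite eqxx.
by move=> /IH ->; rewrite orbT.
Qed.

Lemma shorten_ex {T : eqType} {e : rel T} {x p} : path e x p ->
  exists p', [/\ path e x p', uniq (x :: p'), {subset p' <= p} & last x p' = last x p].
Proof. by move=> hp; case: (shortenP hp) => p' hp' hu hsub; exists p'. Qed.

Lemma last_take_nth (T : Type) (x : T) (q : seq T) k :
  k <= size q -> last x (take k q) = nth x (x :: q) k.
Proof. elim: q k x => [|a q IH] [|k] //= x hk; rewrite IH // (set_nth_default a) //. Qed.

Section Graph.
Variables (n : nat) (g : rel 'I_n) (s : 'I_n) (ps : seq 'I_n).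
Hypothesis Hsp : shortest_path g s ps.

Local Notation h := (size ps).

Lemma uniq_P : uniq (s :: ps).
Proof.
case: Hsp => hp hmin.
have [p' [hp' hu hsub hlast]] := shorten_ex hp.
apply: (leq_size_uniq hu); last by rewrite /= ltnS; exact: hmin.
move=> x; rewrite !inE => /orP[->//|/hsub ->]; by rewrite orbT.
Qed.

Lemma size_uniq_n (x : 'I_n) d : uniq (x :: d) -> (size d).+1 <= n.
Proof.
move=> hu; have := uniq_leq_size hu (fun y _ => mem_enum _ y).
by rewrite size_enum_ord.
Qed.

Lemma h_lt_n : h < n.
Proof. exact: (size_uniq_n _ _ uniq_P). Qed.

Lemma pv_in k : pv s ps k \in s :: ps.
Proof.
rewrite /pv; case: (ltnP k (size (s :: ps))) => hk; first exact: mem_nth.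
by rewrite nth_default // inE eqxx.
Qed.

Lemma index_pv k : k <= h -> index (pv s ps k) (s :: ps) = k.
Proof. by move=> hk; rewrite /pv index_uniq // uniq_P. Qed.

Lemma pv_inj k k' : k <= h -> k' <= h -> (pv s ps k == pv s ps k') = (k == k').
Proof. by move=> hk hk'; rewrite /pv nth_uniq // uniq_P. Qed.

Lemma pv_index x : x \in s :: ps -> pv s ps (index x (s :: ps)) = x.
Proof. exact: nth_index. Qed.

Lemma index_le x : x \in s :: ps -> index x (s :: ps) <= h.
Proof. by rewrite -index_mem. Qed.

Lemma onP_pv u k : k <= h -> onP n s ps u (pv s ps k) = (0 < k) && (u == pv s ps k.-1).
Proof.
move=> hk; rewrite /onP /hst; apply/hasP/andP.
  case=> k'; rewrite mem_iota add0n => hk' /andP[/eqP <- ].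
  rewrite pv_inj //.
  by move=> /eqP <-; split.
case=> k0 /eqP ->; exists k.-1; first by rewrite mem_iota; lia.
by rewrite prednK // !eqxx.
Qed.

Lemma onP_notP u x : x \notin s :: ps -> onP n s ps u x = false.
Proof.
move=> hx; apply/negbTE/hasP; case=> k _ /andP[_ /eqP hk].
by move: hx; rewrite -hk pv_in.
Qed.

Lemma g_pv k : k < h -> g (pv s ps k) (pv s ps k.+1).
Proof.
case: Hsp => hp _ hk; move/(pathP s): hp => /(_ k hk).
by rewrite /pv.
Qed.

Lemma path_bound j l d : j <= h -> l <= h -> path g (pv s ps j) d ->
  last (pv s ps j) d = pv s ps l -> l <= j + size d.
Proof.
move=> hj hl hd hlast.
case: Hsp => hp hmin.
have lt k : k <= h -> last s (take k ps) = pv s ps k.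
  by move=> hk; rewrite /pv last_take_nth.
have ep k : k <= h -> path g s (take k ps) /\ path g (pv s ps k) (drop k ps)
                      /\ last (pv s ps k) (drop k ps) = last s ps.
  move=> hk; move: hp; rewrite -{1}(cat_take_drop k ps) cat_path => /andP[h1 h2].
  rewrite -(lt k hk); split=> //; split=> //.
  by rewrite -last_cat cat_take_drop.
have [hj1 [_ _]] := ep j hj.
have [_ [hl2 hl3]] := ep l hl.
have := hmin (take j ps ++ d ++ drop l ps).
rewrite !cat_path hj1 (lt j hj) hd hlast hl2 !last_cat (lt j hj) hlast hl3.
rewrite !size_cat size_take size_drop.
move=> /(_ isT erefl).
case: (ltnP j h) => hjh; lia.
Qed.

End Graph.
Arguments uniq_P {n g s ps}.
Arguments size_uniq_n {n x d}.
Arguments h_lt_n {n g s ps}.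
Arguments pv_in {n s ps k}.
Arguments index_pv {n g s ps} Hsp {k}.
Arguments pv_inj {n g s ps} Hsp {k k'}.
Arguments pv_index {n s ps x}.
Arguments index_le {n s ps x}.
Arguments onP_pv {n g s ps} Hsp u {k}.
Arguments onP_notP {n s ps} u {x}.
Arguments g_pv {n g s ps} Hsp {k}.
Arguments path_bound {n g s ps} Hsp {j l d}.

Section Math.
Variables (n : nat) (g : rel 'I_n) (s : 'I_n) (ps : seq 'I_n) (zeta : nat).
Hypothesis Hsp : shortest_path g s ps.
Hypothesis Hz : 1 <= zeta.

Local Notation h := (size ps).
Local Notation pv := (pv s ps).

Definition gP (u v : 'I_n) : bool := (u != v) && g u v && ~~ onP n s ps u v.

Fixpoint M (r : nat) (x : 'I_n) : nat :=
  match r with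
  | 0 => if x \in s :: ps then index x (s :: ps) else n
  | r'.+1 => minn (M r' x) (foldr minn n [seq M r' u | u <- enum 'I_n & gP u x])
  end.

Lemma M0 x : M 0 x = if x \in s :: ps then index x (s :: ps) else n.
Proof. by []. Qed.

Lemma M_le r x : M r x <= n.
Proof.
elim: r x => [|r IH] x /=.
  case: ifP => // hx; exact: leq_trans (index_le hx) (ltnW (h_lt_n Hsp)).
exact: leq_trans (geq_minl _ _) (IH x).
Qed.

Lemma Mb r x : M r x < n -> M r x <= h /\
  exists d, [/\ path gP (pv (M r x)) d, last (pv (M r x)) d = x & size d <= r].
Proof.
elim: r x => [|r IH] x /=.
  case: ifP => hx; last by rewrite ltnn.
  move=> _; split; first exact: index_le hx.
  by exists [::]; split=> //; rewrite /= pv_index.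
set F := foldr _ _ _.
case: (leqP (M r x) F) => hle.
  move=> /IH [h1 [d [h2 h3 h4]]]; split=> //; exists d; split=> //; lia.
move=> hF.
have : F \in [seq M r u | u <- enum 'I_n & gP u x] by apply: fmin_in.
case/mapP=> u; rewrite mem_filter => /andP[hgu _] hFu; rewrite hFu.
have /IH [h1 [d [h2 h3 h4]]] : M r u < n by rewrite -hFu.
split=> //; exists (rcons d x); rewrite rcons_path last_rcons size_rcons h2 h3 hgu.
by split.
Qed.

Lemma Mc r j x d : j <= h -> path gP (pv j) d -> last (pv j) d = x -> size d <= r ->
  M r x <= j.
Proof.
elim: r x d => [|r IH] x d hj.
  by case: d => // _ <- _; rewrite M0 pv_in (index_pv Hsp hj).
move=> hd hl; rewrite leq_eqVlt => /orP[/eqP hsz|]; last first.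
  rewrite ltnS => hsz; exact: leq_trans (geq_minl _ _) (IH _ _ hj hd hl hsz).
case/lastP: d hd hl hsz => [//|d y].
rewrite rcons_path last_rcons size_rcons => /andP[hd hgy] <- /eqP; rewrite eqSS => /eqP hsz.
have hMu := IH _ _ hj hd erefl (eq_leq hsz).
apply: leq_trans (geq_minr _ _) _.
apply: leq_trans hMu; apply: fmin_le; apply/mapP; exists (last (pv j) d) => //.
by rewrite mem_filter hgy mem_enum.
Qed.

Definition histM (x : 'I_n) := [seq M r x | r <- iota 0 zeta.+1].
Definition Cm (l i : nat) := Cfun (2 * n) (h - l) (histM (pv l)) i.

Fixpoint Vm (sx l : nat) : nat :=
  minn (Cm l (l + sx - zeta))
       (match sx with 0 => 2 * n | s'.+1 => if l < h then Vm s' l.+1 else 2 * n end).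

Lemma size_histM x : size (histM x) = zeta.+1.
Proof. by rewrite size_map size_iota. Qed.

Lemma nth_histM x r : r <= zeta -> nth 0 (histM x) r = M r x.
Proof. by move=> hr; rewrite (nth_map 0) ?size_iota // nth_iota. Qed.

Lemma Cm_leB l i : Cm l i <= 2 * n.
Proof. exact: geq_minl. Qed.

Lemma Cm_le l i r : r <= zeta -> M r (pv l) <= i -> Cm l i <= M r (pv l) + r + (h - l).
Proof.
move=> hr hM; apply: leq_trans (geq_minr _ _) _.
apply: fmin_le; apply/mapP; exists r; first by rewrite size_histM mem_iota.
by rewrite nth_histM // hM.
Qed.

Lemma Cm_lt l i : Cm l i < 2 * n -> exists r, [/\ r <= zeta, M r (pv l) <= i &
   Cm l i = M r (pv l) + r + (h - l)].
Proof.
rewrite /Cm /Cfun (minn_idPr (fmin_leB _ _)) => hlt.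
have := fmin_in _ _ hlt; set v := foldr _ _ _ in hlt * => /mapP [r hr hv].
move: hr; rewrite size_histM mem_iota add0n ltnS => hr.
move: hv; rewrite nth_histM //; case: ifP => hM hv; last by move: hlt; rewrite hv ltnn.
by exists r.
Qed.

Lemma Vm_leB sx l : Vm sx l <= 2 * n.
Proof. by case: sx => [|sx] /=; apply: leq_trans (geq_minl _ _) (Cm_leB _ _). Qed.

Lemma Vm_P1 sx l l' : l <= l' <= l + sx -> l' <= h -> Vm sx l <= Cm l' (l + sx - zeta).
Proof.
elim: sx l => [|sx IH] l.
  move=> hl _; have -> : l' = l by lia.
  exact: geq_minl.
move=> hl hl'; rewrite /=.
case: (ltnP l l') => hll.
  have hlh : l < h by lia.
  rewrite hlh; apply: leq_trans (geq_minr _ _) _.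
  have -> : l + sx.+1 - zeta = l.+1 + sx - zeta by lia.
  apply: IH => //; lia.
have -> : l' = l by lia.
exact: geq_minl.
Qed.

Lemma Vm_P2 sx l : l <= h -> Vm sx l < 2 * n -> exists l',
  [/\ l <= l' <= l + sx, l' <= h & Vm sx l = Cm l' (l + sx - zeta)].
Proof.
elim: sx l => [|sx IH] l hl /=.
  rewrite (minn_idPl (Cm_leB _ _)) => _; exists l; split=> //; lia.
case: (leqP (Cm l (l + sx.+1 - zeta)) _) => hle hlt.
  exists l; split=> //; lia.
case: ifP hlt hle => hlh hlt hle; last by move: hlt; rewrite ltnn.
have [l' [h1 h2 h3]] := IH _ hlh hlt.
exists l'; split=> //; first lia.
rewrite h3; congr Cm; lia.
Qed.

Lemma gP_of x d : path g x d -> uniq (x :: d) ->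
  all (fun e => ~~ onP n s ps e.1 e.2) (zip (x :: d) d) -> path gP x d.
Proof.
elim: d x => //= y d IH x /andP[hxy hd] /andP[hx hu] /andP[ho hall].
rewrite /gP hxy ho andbT /= IH // andbT.
by rewrite andbT; apply: contraNneq hx => ->; rewrite inE eqxx.
Qed.

Lemma of_gP x d : path gP x d -> path g x d && all (fun e => ~~ onP n s ps e.1 e.2) (zip (x :: d) d).
Proof.
elim: d x => //= y d IH x /andP[/andP[/andP[_ hxy] ho] hd].
by rewrite hxy ho /=; exact: IH.
Qed.

Lemma e_idx i : i.+1 + zeta.-1 - zeta = i.
Proof. lia. Qed.

Lemma rp_complete i m : short_rp g s ps zeta i m -> Vm zeta.-1 i.+1 <= m.
Proof.
move=> [j [l [d [[hj /andP[hil hlh] hd hlast] [hu hsz hall ->]]]]].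
rewrite /hst in hlh *.
have hjh : j <= h by lia.
have hb := path_bound Hsp hjh hlh hd hlast.
have hgp := gP_of _ _ hd hu hall.
have hM := @Mc (size d) j (pv l) d hjh hgp hlast (leqnn _).
have hC := Cm_le l i (size d) hsz (leq_trans hM hj).
apply: leq_trans (Vm_P1 zeta.-1 i.+1 l _ hlh) _; first lia.
rewrite e_idx; lia.
Qed.

Lemma rp_bound i m : short_rp g s ps zeta i m -> m < 2 * n.
Proof.
move=> [j [l [d [[hj /andP[hil hlh] hd hlast] [hu hsz hall ->]]]]].
rewrite /hst in hlh *.
have := size_uniq_n hu; have := h_lt_n Hsp; lia.
Qed.

Lemma rp_sound i : i < h -> Vm zeta.-1 i.+1 < 2 * n ->
  exists L, short_rp g s ps zeta i L /\ L <= Vm zeta.-1 i.+1.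
Proof.
move=> hi hV.
have [l [h1 h2 h3]] := Vm_P2 zeta.-1 i.+1 hi hV.
rewrite e_idx in h3.
have hC : Cm l i < 2 * n by rewrite -h3.
have [r [hr hMi hCe]] := Cm_lt l i hC.
have hMn : M r (pv l) < n by have := h_lt_n Hsp; lia.
have [hMh [d [hd hl hsz]]] := Mb r (pv l) hMn.
have [p' [hp' hu hsub hl']] := shorten_ex hd.
have hsz' : size p' <= size d.
  by apply: uniq_leq_size hsub; case/andP: hu.
case/andP: (of_gP _ _ hp') => hpg hall.
exists (M r (pv l) + size p' + (h - l)); split; last by rewrite h3 hCe; lia.
exists (M r (pv l)), l, p'; split; split=> //; rewrite ?hl' ?hl //; try lia.
  by rewrite /hst; apply/andP; split; lia.
exact: leq_trans hsz' (leq_trans hsz hr).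
Qed.

Lemma rp_main i : i < h ->
  rp_value g s ps zeta i (if Vm zeta.-1 i.+1 < 2 * n then Some (Vm zeta.-1 i.+1) else None).
Proof.
move=> hi; case: ifP => hV /=.
  have [L [hL hle]] := rp_sound i hi hV.
  have := rp_complete i L hL => hge.
  have -> : Vm zeta.-1 i.+1 = L by lia.
  split=> // m' hm'; rewrite -(_ : Vm zeta.-1 i.+1 = L) ?(rp_complete i m' hm') //; lia.
move=> m hm; have := rp_complete i m hm; have := rp_bound i m hm; move/negbT: hV; lia.
Qed.

End Math.

Section Run.
Variables (n : nat) (g : rel 'I_n) (s : 'I_n) (ps : seq 'I_n) (idf : 'I_n -> nat) (zeta : nat).
Hypothesis Hinj : injective idf.
Hypothesis Hsp : shortest_path g s ps.
Hypothesis Hz : 1 <= zeta.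

Local Notation h := (size ps).
Local Notation pv := (pv s ps).
Local Notation inp := (input g s ps idf zeta).
Local Notation c := (run g Alg idf inp).
Local Notation M := (M n g s ps).
Local Notation Vm := (Vm n g s ps zeta).
Local Notation histM := (histM n g s ps zeta).
Local Notation W := (Wd n).

Lemma run_S r x : c r.+1 x =
  a_recv (c r x) [seq (idf u, a_send (c r u) (idf x)) | u <- enum 'I_n & comm g u x].
Proof. by []. Qed.

Lemma inp_pres r x : a_inp (c r x) = inp x.
Proof.
elim: r x => [//|r IH] x; rewrite run_S /a_recv; case: ifP => _ /=; exact: IH.
Qed.

Lemma size_send r u w : size (a_send (c r u) w) = W.
Proof. by rewrite /a_send size_enc inp_pres. Qed.

Lemma W_bound x : x <= 2 * n -> x < 2 ^ W.
Proof.
move=> hx; rewrite /Wd /nbits expnS.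
have := trunc_log_ltn n (isT : 1 < 2); lia.
Qed.

Lemma li_pprevE x : li_pprev (inp x) =
  if (x \in s :: ps) && (0 < index x (s :: ps)) then Some (idf (pv (index x (s :: ps)).-1)) else None.
Proof. by []. Qed.
Lemma li_pnextE x : li_pnext (inp x) =
  if (x \in s :: ps) && (index x (s :: ps) < h) then Some (idf (pv (index x (s :: ps)).+1)) else None.
Proof. by []. Qed.
Lemma li_posE x : li_pos (inp x) =
  if (x \in s :: ps) then Some (index x (s :: ps), index x (s :: ps), h - index x (s :: ps)) else None.
Proof. by []. Qed.
Lemma li_inE x : li_in (inp x) = [seq idf u | u <- enum 'I_n & g u x].
Proof. by []. Qed.

Lemma pprev_ok u x : (Some (idf u) != li_pprev (inp x)) = ~~ onP n s ps u x.
Proof.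
rewrite li_pprevE; case hx: (x \in s :: ps); last by rewrite andFb onP_notP ?hx.
rewrite andTb -[in RHS](pv_index hx) (onP_pv Hsp u (index_le hx)).
case: (0 < index x (s :: ps)) => //.
by rewrite andTb; apply/negb_inj; rewrite !negbK (inj_eq (@Some_inj _)) (inj_eq Hinj).
Qed.

Lemma filt_ok u x :
  ((idf u \in li_in (inp x)) && (Some (idf u) != li_pprev (inp x))) && comm g u x = gP n g s ps u x.
Proof.
rewrite pprev_ok li_inE (mem_map Hinj) mem_filter mem_enum andbT /gP /comm.
by case: (u != x); case: (g u x); case: (g x u); case: (onP n s ps u x).
Qed.

Lemma phase1 r x : r <= zeta ->
  c r x = Ast (inp x) r (M r x) [seq M k x | k <- iota 0 r.+1] (2 * n).
Proof.
elim: r x => [|r IH] x hr.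
  rewrite /= /a_init /=; case: (x \in s :: ps) => //.
rewrite run_S IH; last by lia.
have -> : iota 0 r.+2 = rcons (iota 0 r.+1) r.+1 by rewrite -addn1 iotaD cats1.
rewrite map_rcons /a_recv /=.
have -> : r < zeta by [].
have -> : [seq (idf u, a_send (c r u) (idf x)) | u <- enum 'I_n & comm g u x] =
          [seq (idf u, enc W (M r u)) | u <- enum 'I_n & comm g u x].
  apply: eq_map => u; rewrite IH; last by lia.
  by rewrite /a_send /outv /= hr.
rewrite filter_map -map_comp -filter_predI.
rewrite (eq_filter (a2 := fun u => gP n g s ps u x)); last first.
  by move=> u /=; rewrite filt_ok.
rewrite (eq_map (g := M r)); last first.
  move=> u; apply: dec_enc; apply: W_bound; have := M_le n g s ps Hsp r u; lia.
by [].
Qed.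

Definition R (sx : nat) (x : 'I_n) : nat :=
  match sx with
  | 0 => 2 * n
  | sx'.+1 => if (x \in s :: ps) && (index x (s :: ps) < h)
              then Vm sx' (index x (s :: ps)).+1 else 2 * n
  end.

Lemma recv2E li t m hi r2 msgs : li_zeta li <= t ->
  a_recv (Ast li t m hi r2) msgs = Ast li t.+1 m hi
    (match li_pnext li with Some pid => dec (lookup pid msgs) | None => 2 * li_n li end).
Proof. by move=> ht; rewrite /a_recv /= ltnNge ht. Qed.

Lemma outv2E li t m hi r2 : li_zeta li <= t ->
  outv (Ast li t m hi r2) = match li_pos li with
   | Some (l, _, _) => minn (Cval (Ast li t m hi r2) (l + (t - li_zeta li) - li_zeta li)) r2
   | None => 2 * li_n li end.
Proof. by move=> ht; rewrite /outv /= ltnNge ht. Qed.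

Lemma CvalE li t m hi r2 i : Cval (Ast li t m hi r2) i = match li_pos li with
  | Some (_, _, dt) => Cfun (2 * li_n li) dt hi i | None => 2 * li_n li end.
Proof. by []. Qed.

Lemma li_zetaE x : li_zeta (inp x) = zeta.
Proof. by []. Qed.

Lemma lookup_ok (F : 'I_n -> seq bool) w x : comm g w x ->
  lookup (idf w) [seq (idf u, F u) | u <- enum 'I_n & comm g u x] = F w.
Proof.
move=> hw; rewrite /lookup filter_map -map_comp.
rewrite (eq_filter (a2 := pred1 w)); last by move=> u /=; rewrite (inj_eq Hinj).
rewrite filter_pred1_uniq //; first by rewrite filter_uniq // enum_uniq.
by rewrite mem_filter hw mem_enum.
Qed.

Lemma phase2 sx x :
  c (zeta + sx) x = Ast (inp x) (zeta + sx) (M zeta x) (histM x) (R sx x).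
Proof.
elim: sx x => [|sx IH] x.
  by rewrite addn0 phase1.
rewrite addnS run_S IH recv2E; last by rewrite li_zetaE; lia.
congr Ast.
rewrite li_pnextE /R.
case: ifP => // /andP[hx hk].
set k := index x (s :: ps).
set w := pv k.+1.
have hxk : x = pv k by rewrite pv_index.
have hcomm : comm g w x.
  rewrite /comm hxk (g_pv Hsp hk) orbT andbT.
  rewrite (pv_inj Hsp) //; first by elim: (k).
  exact: ltnW.
rewrite (lookup_ok (fun u => a_send (c (zeta + sx) u) (idf x)) w x hcomm) /a_send IH.
have hwi : w \in s :: ps by exact: pv_in.
have hiw : index w (s :: ps) = k.+1 by rewrite (index_pv Hsp).
have -> : outv (Ast (inp w) (zeta + sx) (M zeta w) (histM w) (R sx w)) = Vm sx k.+1.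
  rewrite outv2E; last by rewrite li_zetaE; lia.
  rewrite li_posE hwi hiw li_zetaE addKn CvalE li_posE hwi hiw.
  case: sx {IH} => [|sx] //.
  by rewrite /R hwi hiw.
by rewrite dec_enc // W_bound // Vm_leB.
Qed.

Lemma final i : i < h -> a_out (c (2 * zeta) (pv i)) =
  if Vm zeta.-1 i.+1 < 2 * n then Some (Vm zeta.-1 i.+1) else None.
Proof.
move=> hi.
have -> : 2 * zeta = zeta + zeta.-1.+1 by lia.
have hR : R zeta.-1.+1 (pv i) = Vm zeta.-1 i.+1.
  by rewrite /R pv_in (index_pv Hsp) ?hi //; exact: ltnW.
rewrite phase2 hR; by [].
Qed.

Lemma send_bound r u w : size (a_send (c r u) w) <= 2 * nbits (n + \max_(x : 'I_n) idf x).
Proof.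
rewrite size_send /Wd /nbits.
have := leq_trunc_log 2 (leq_addr (\max_(x : 'I_n) idf x) n); lia.
Qed.

End Run.

Theorem proposition4p1 :
  exists (c_r c_b : nat) (A : congest_algo),
  forall (n : nat) (g : rel 'I_n) (s : 'I_n) (ps : seq 'I_n)
         (idf : 'I_n -> nat) (zeta : nat),
    injective idf ->
    shortest_path g s ps ->
    1 <= zeta ->
    (forall (r : nat) (u v : 'I_n), r < c_r * zeta -> comm g u v ->
       size (alg_send A (run g A idf (input g s ps idf zeta) r u) (idf v))
         <= c_b * nbits (n + \max_(x : 'I_n) idf x)) /\
    (forall i : nat, i < size ps ->
       rp_value g s ps zeta i
         (alg_out A (run g A idf (input g s ps idf zeta) (c_r * zeta)
                        (pv s ps i)))).
Proof.
exists 2, 2, Alg => n g s ps idf zeta Hinj Hsp Hz; split.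
  by move=> r u v _ _; exact: send_bound.
move=> i hi.
have -> : alg_out Alg (run g Alg idf (input g s ps idf zeta) (2 * zeta) (pv s ps i)) =
  if Vm n g s ps zeta zeta.-1 i.+1 < 2 * n then Some (Vm n g s ps zeta zeta.-1 i.+1) else None.
  exact: final.
exact: rp_main.
Qed.
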